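(* Let $k$ be a field and let $A = H_{\bullet}(\overline{M}_{0,5})$ be the homology ring (isomorphic to the Chow ring) of the moduli space $\overline{M}_{0,5}$ of stable $5$-pointed curves of genus zero, graded so that the classes $D^S$ of boundary divisors have degree $1$. Then $A$ is a Koszul algebra.
   Context: By Keel's presentation, for $n\ge 4$ the ring $H_{\bullet}(\overline{M}_{0,n})$ is the commutative graded $k$-algebra generated in degree $1$ by variables $D^S$, indexed by subsets $S\subset\{1,\dots,n\}$ with $|S|\ge 2$ and $|S^C|\ge 2$, with $D^S=D^{S^C}$, subject to the relations: (1) for any four distinct $i,j,k,l\in\{1,\dots,n\}$, $\sum_{i,j\in S,\,k,l\notin S} D^S=\sum_{i,k\in S,\,j,l\notin S} D^S=\sum_{i,l\in S,\,j,k\notin S} D^S$; (2) $D^SD^T=0$ unless $S\subset T$, $T\subset S$, $S\subset T^C$, or $T^C\subset S$. A quadratic graded algebra is Koszul if its trivial module $k$ admits a linear graded free resolution. *)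

(* Defs.v *)
From HB Require Import structures.
From mathcomp Require Import all_boot all_order all_algebra.
From mathcomp Require Import mpoly.
Set Implicit Arguments.
Unset Strict Implicit.
Unset Printing Implicit Defensive.
Import GRing.Theory.
Local Open Scope ring_scope.

Section Keel.
Variables (k : fieldType) (n : nat).

(* Ambient free commutative polynomial ring: one variable per subset S of
   {1..n} (encoded as 'I_n).  The variable for S is D S. *)
Definition keel_nvar := #|{: {set 'I_n}}|.
Definition KPoly := {mpoly k[keel_nvar]}.
Definition D (S : {set 'I_n}) : KPoly := 'X_(enum_rank S).

(* S indexes a genuine boundary divisor: |S| >= 2 and |S^C| >= 2. *)
Definition keel_valid (S : {set 'I_n}) : bool := (2 <= #|S|)%N && (2 <= #|~: S|)%N.

Definition keel_compat (S T : {set 'I_n}) : bool :=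
  [|| S \subset T, T \subset S, S \subset ~: T | ~: T \subset S].

Definition keel_sum (i j k' l : 'I_n) : KPoly :=
  \sum_(S : {set 'I_n} | [&& i \in S, j \in S, k' \notin S & l \notin S]) D S.

(* Generators of the ideal of relations of Keel's presentation:
   - D^S = 0 for subsets S not indexing a divisor (only valid S are generators),
   - D^S = D^{S^C},
   - relation (1) for four distinct indices,
   - relation (2): D^S D^T = 0 for incompatible valid S, T. *)
Definition keel_gen (p : KPoly) : Prop :=
  [\/ (exists S, ~~ keel_valid S /\ p = D S),
      (exists S, p = D S - D (~: S)),
      (exists i j k' l, uniq [:: i; j; k'; l] /\
                        (p = keel_sum i j k' l - keel_sum i k' j l \/
                         p = keel_sum i k' j l - keel_sum i l j k'))
    | (exists S T, [/\ keel_valid S, keel_valid T, ~~ keel_compat S T & p = D S * D T])].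

(* The ideal I generated by keel_gen; A = KPoly / I is Keel's presentation of
   H_*(Mbar_{0,n}), graded by polynomial degree (all generators D^S in degree 1). *)
Definition keel_ideal (p : KPoly) : Prop :=
  exists s : seq (KPoly * KPoly),
    (forall x, x \in s -> keel_gen x.2) /\ p = \sum_(x <- s) x.1 * x.2.

(* Vectors/matrices over KPoly represent elements/maps of free A-modules
   (equality in A^b is congruence modulo I entrywise). *)
Definition vec_in_ideal b (v : 'rV[KPoly]_b) : Prop := forall j, keel_ideal (v 0 j).

(* A linear graded free resolution of the trivial module k over A:
   F_i = A(-i)^(b i) (free, generated in degree i), differential
   d_i : F_(i+1) -> F_i, v |-> v *m M i, with M i a matrix of linear forms
   (degree-0 graded maps A(-i-1)^b' -> A(-i)^b are exactly such matrices),
   augmentation eps : F_0 -> k, eps v = sum_j c_j * (constant term of v_j),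
   and the augmented complex ... -> F_1 -> F_0 -> k -> 0 exact. *)
Definition has_linear_free_resolution : Prop :=
  exists (b : nat -> nat) (c : 'rV[k]_(b 0%N)) (M : forall i, 'M[KPoly]_(b i.+1, b i)),
    [/\ c != 0,                                   (* eps surjective *)
        forall i r s, M i r s \is 1.-homog,
        forall i, forall r s, keel_ideal ((M i.+1 *m M i) r s),
        forall v : 'rV[KPoly]_(b 0%N),
          \sum_j c 0 j * (v 0 j)@_0%MM = 0 ->
          exists w : 'rV[KPoly]_(b 1%N), vec_in_ideal (v - w *m M 0%N)
      & forall i (v : 'rV[KPoly]_(b i.+1)),
          vec_in_ideal (v *m M i) ->
          exists w : 'rV[KPoly]_(b i.+2), vec_in_ideal (v - w *m M i.+1)].

Definition keel_koszul : Prop := has_linear_free_resolution.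

End Keel.

(* Main.v *)
From HB Require Import structures.
From mathcomp Require Import all_boot all_order all_algebra.
From mathcomp Require Import mpoly ring zify.
Require Import Defs.
Set Implicit Arguments.
Unset Strict Implicit.
Unset Printing Implicit Defensive.
Import GRing.Theory.
Local Open Scope ring_scope.

Section Model.
Variable k : fieldType.
Definition V := 'rV[k]_5.
Definition eps (c : 'I_5) : k := if c == ord_max then 1 else -1.
Definition q (x y : V) : k := \sum_c eps c * x 0 c * y 0 c.

Lemma qC x y : q x y = q y x.
Proof. by apply: eq_bigr => c _; rewrite -!mulrA [y 0 c * _]mulrC. Qed.
Lemma qDl x y z : q (x + y) z = q x z + q y z.
Proof. rewrite /q -big_split; apply: eq_bigr => c _; by rewrite !mxE mulrDr mulrDl. Qed.
Lemma qZl a x z : q (a *: x) z = a * q x z.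
Proof. rewrite /q mulr_sumr; apply: eq_bigr => c _; rewrite mxE /=; ring. Qed.
Lemma qDr x y z : q z (x + y) = q z x + q z y.
Proof. by rewrite qC qDl !(qC z). Qed.
Lemma qZr a x z : q z (a *: x) = a * q z x.
Proof. by rewrite qC qZl qC. Qed.
Lemma q0l z : q 0 z = 0.
Proof. by rewrite -(scale0r 0) qZl mul0r. Qed.
Lemma q0r z : q z 0 = 0.
Proof. by rewrite qC q0l. Qed.
Lemma qNl x z : q (- x) z = - q x z.
Proof. by rewrite -scaleN1r qZl mulN1r. Qed.
Lemma qNr x z : q z (- x) = - q z x.
Proof. by rewrite qC qNl qC. Qed.
Lemma qsuml I (r : seq I) P (F : I -> V) z :
  q (\sum_(i <- r | P i) F i) z = \sum_(i <- r | P i) q (F i) z.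
Proof. elim/big_rec2: _ => [|i y1 y2 _ <-]; by rewrite ?q0l ?qDl. Qed.
Lemma qsumr I (r : seq I) P (F : I -> V) z :
  q z (\sum_(i <- r | P i) F i) = \sum_(i <- r | P i) q z (F i).
Proof. by rewrite qC qsuml; apply: eq_bigr => i _; rewrite qC. Qed.

Definition A := (k * V * k)%type.
HB.instance Definition _ := GRing.Zmodule.on A.
Definition Aone : A := (1, 0, 0).
Definition Amul (x y : A) : A :=
  (x.1.1 * y.1.1, x.1.1 *: y.1.2 + y.1.1 *: x.1.2,
   x.1.1 * y.2 + y.1.1 * x.2 + q x.1.2 y.1.2).

Lemma AmulA : associative Amul.
Proof.
case=> [[a1 v1] c1] [[a2 v2] c2] [[a3 v3] c3]; rewrite /Amul /=.
congr (_, _, _); first by rewrite mulrA.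
  by rewrite !scalerDr !scalerA -addrA [a3 * a1]mulrC [a3 * a2]mulrC.
rewrite ?qDl ?qDr !qZl !qZr; ring.
Qed.
Lemma AmulC : commutative Amul.
Proof. case=> [[a1 v1] c1] [[a2 v2] c2]; rewrite /Amul /= mulrC qC; congr (_,_,_); first by rewrite addrC.
by rewrite [_ * c2 + _]addrC. Qed.
Lemma Amul1 : left_id Aone Amul.
Proof. case=> [[a1 v1] c1]; by rewrite /Amul /= scale1r scaler0 addr0 q0l !mul1r mulr0 !addr0. Qed.
Lemma AmulDl : left_distributive Amul +%R.
Proof.
case=> [[a1 v1] c1] [[a2 v2] c2] [[a3 v3] c3]; rewrite /Amul /=.
congr (_,_,_); first by rewrite mulrDl.
  by rewrite scalerDl scalerDr; rewrite !addrA; congr (_ + _); rewrite -!addrA; congr (_ + _); rewrite addrC.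
rewrite qDl /=; ring.
Qed.
Lemma Aone_neq0 : Aone != 0.
Proof. by apply/eqP => /(congr1 (fun x : A => x.1.1)) /= /eqP; rewrite oner_eq0. Qed.
HB.instance Definition _ := GRing.Zmodule_isComNzRing.Build A AmulA AmulC Amul1 AmulDl Aone_neq0.

Lemma AmulE (x y : A) : x * y = (x.1.1 * y.1.1, x.1.1 *: y.1.2 + y.1.1 *: x.1.2,
   x.1.1 * y.2 + y.1.1 * x.2 + q x.1.2 y.1.2).
Proof. by []. Qed.
Lemma AoneE : (1 : A) = (1, 0, 0). Proof. by []. Qed.
End Model.

Section LinAlg.
Variable k : fieldType.
Local Notation V := (V k).
Local Notation q := (@q k).

Lemma eps_neq0 c : eps k c != 0.
Proof. by rewrite /eps; case: ifP => _; rewrite ?oppr_eq0 oner_eq0. Qed.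

Lemma q_e (x : V) c : q x (delta_mx 0 c) = eps k c * x 0 c.
Proof.
rewrite /q (bigD1 c) //= big1 ?addr0; first by rewrite mxE !eqxx mulr1.
by move=> d /negbTE hd; rewrite mxE hd andbF mulr0.
Qed.

Lemma gperp (p : V) : exists g : V, q g p = 0 /\ exists u, q g u = 1.
Proof.
set i0 : 'I_5 := ord0. set i1 : 'I_5 := lift ord0 ord0.
pose g : V := if (p 0 i0 != 0) || (p 0 i1 != 0) then
   p 0 i1 *: delta_mx 0 i0 - p 0 i0 *: delta_mx 0 i1 else delta_mx 0 i0.
have gnz : exists c, g 0 c != 0.
  rewrite /g; case: ifP => [/orP [h|h]|_].
  - by exists i1; rewrite !mxE /= mulr1 mulr0 sub0r oppr_eq0.
  - by exists i0; rewrite !mxE /= mulr1 mulr0 subr0.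
  - by exists i0; rewrite mxE !eqxx oner_eq0.
exists g; split.
  rewrite /g; case: ifP => [_|/norP [/negPn/eqP h _]].
    by rewrite qDl qNl !qZl qC q_e (qC _ p) q_e /eps /=; ring.
  by rewrite qC q_e h mulr0.
case: gnz => c hc; exists ((eps k c * g 0 c)^-1 *: delta_mx 0 c).
by rewrite qZr q_e mulVf // mulf_neq0 // eps_neq0.
Qed.

Record St := MkSt { bi : nat; bo : nat; mat : 'I_bo -> 'I_bi -> V }.
Arguments mat : clear implicits.

Section Step.
Variable s : St.
Definition Tm (z : 'M[k]_(bo s, 5)) : 'rV[k]_(bi s) :=
  \row_t \sum_r q (row r z) (mat s r t).
Fact Tm_lin : linear Tm.
Proof.
move=> a x y; apply/rowP => t; rewrite !mxE mulr_sumr -big_split /=.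
by apply: eq_bigr => r _; rewrite linearD linearZ /= qDl qZl.
Qed.
HB.instance Definition _ := GRing.isLinear.Build k _ _ _ Tm Tm_lin.
End Step.
Arguments Tm : clear implicits.

Definition Zsp s : {vspace 'M[k]_(bo s, 5)} := lker (linfun (Tm s)).

Lemma memZ s z : (z \in Zsp s) = [forall t, \sum_r q (row r z) (mat s r t) == 0].
Proof.
rewrite memv_ker lfunE; apply/eqP/forallP => [h t|h].
  by move/rowP: h => /(_ t); rewrite !mxE => ->.
by apply/rowP => t; rewrite !mxE; apply/eqP.
Qed.

Definition step s : St :=
  MkSt (fun (j : 'I_(\dim (Zsp s))) (r : 'I_(bo s)) => row r (vbasis (Zsp s))`_j).

Definition Hinv s := forall (p : V) (y : 'I_(bi s) -> k),
  exists w : 'I_(bo s) -> V, (forall r, q (w r) p = 0) /\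
    forall t, \sum_r q (w r) (mat s r t) = y t.
Definition Rinv s := forall a : 'I_(bo s) -> k,
  (forall t, \sum_r a r *: mat s r t = 0) -> forall r, a r = 0.

Lemma step_in s j t : \sum_r q (mat (step s) j r) (mat s r t) = 0.
Proof.
have : (vbasis (Zsp s))`_j \in Zsp s by apply/vbasis_mem/mem_nth; rewrite size_tuple.
by rewrite memZ => /forallP/(_ t)/eqP.
Qed.

Lemma step_span s (u : 'I_(bo s) -> V) :
  (forall t, \sum_r q (u r) (mat s r t) = 0) ->
  exists a : 'I_(bo (step s)) -> k, forall r, u r = \sum_j a j *: mat (step s) j r.
Proof.
move=> hu; pose z : 'M[k]_(bo s, 5) := \matrix_r u r.
have zZ : z \in Zsp s.
  rewrite memZ; apply/forallP => t; apply/eqP; rewrite -[RHS](hu t).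
  by apply: eq_bigr => r _; rewrite rowK.
exists (fun j => coord (vbasis (Zsp s)) j z) => r.
have -> : u r = row r z by rewrite rowK.
rewrite {1}(coord_vbasis zZ) linear_sum; apply: eq_bigr => j _; by rewrite linearZ.
Qed.

Lemma step_R s : Rinv (step s).
Proof.
move=> a ha; have /freeP := basis_free (vbasisP (Zsp s)); apply.
apply/row_matrixP => r; rewrite linear_sum /= row0 -[RHS](ha r).
by apply: eq_bigr => j _; rewrite linearZ.
Qed.

Lemma step_H s : Hinv s -> Hinv (step s).
Proof.
move=> hs p y; have [g [gp [u gu]]] := gperp p.
have [rw [rwg rwM]] := hs g (fun t => - \sum_r y r * q u (mat s r t)).
have tZ : forall t, \sum_r q (y r *: u + rw r) (mat s r t) = 0.
  move=> t; rewrite (eq_bigr (fun r => y r * q u (mat s r t) + q (rw r) (mat s r t))).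
    by rewrite big_split /= rwM subrr.
  by move=> r _; rewrite qDl qZl.
have [a ha] := step_span tZ.
exists (fun j => a j *: g); split => [j|r]; first by rewrite qZl gp mulr0.
have -> : y r = q g (y r *: u + rw r) by rewrite qDr qZr gu mulr1 qC rwg addr0.
rewrite ha qsumr; apply: eq_bigr => j _; by rewrite qZl qZr.
Qed.

Lemma step_surj s : Hinv s -> forall y : 'I_(bi s) -> k,
  exists w : 'I_(bo s) -> V, forall t, \sum_r q (w r) (mat s r t) = y t.
Proof. move=> hs y; have [w [_ hw]] := hs 0 y; by exists w. Qed.

Definition st0 : St := @MkSt 0 1 (fun _ t => match t with Ordinal _ h => False_rect _ (notF h) end).
Lemma H0 : Hinv st0.
Proof. move=> p y; exists (fun _ => 0); split => [r|[]//]; exact: q0l. Qed.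

Definition stn i := iter i step st0.
Lemma Hn i : Hinv (stn i).
Proof. elim: i => [|i IH]; [exact: H0| exact: step_H]. Qed.

End LinAlg.

Lemma exhaust (a b c d e x : 'I_5) : uniq [:: a; b; c; d; e] ->
  [|| x == a, x == b, x == c, x == d | x == e].
Proof.
move=> u; have /card_uniqP hc := u.
have : x \in [:: a; b; c; d; e].
  have := @subset_cardP _ (mem [:: a; b; c; d; e]) (mem 'I_5).
  rewrite hc card_ord => /(_ erefl) /(_ (subset_predT _)) => h.
  by rewrite h.
by rewrite !inE.
Qed.

Lemma fifth (a b c d : 'I_5) : uniq [:: a; b; c; d] ->
  exists e, uniq [:: a; b; c; d; e].
Proof.
move=> u; have /card_uniqP hc := u.
case: (pickP [predC [:: a; b; c; d]]) => [e he|h0].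
  exists e; have -> : [:: a; b; c; d; e] = rcons [:: a; b; c; d] e by [].
  by rewrite rcons_uniq u andbT; move: he; rewrite inE.
have : (#|'I_5| <= #|[:: a; b; c; d]|)%N.
  apply: subset_leq_card; apply/subsetP => x _; have := h0 x; rewrite inE /=.
  by move/negbFE.
by rewrite card_ord hc.
Qed.

Lemma pair_card (a b : 'I_5) : a != b -> #|[set a; b]| = 2%N.
Proof. by move=> h; rewrite cards2 h. Qed.

Lemma compl_card (A : {set 'I_5}) : #|~: A| = (5 - #|A|)%N.
Proof. by rewrite cardsCs card_ord setCK. Qed.

Lemma valid_pair (a b : 'I_5) : a != b -> keel_valid [set a; b].
Proof. by move=> h; rewrite /keel_valid compl_card pair_card. Qed.

Lemma incompat_pair (a b d : 'I_5) : uniq [:: a; b; d] ->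
  ~~ keel_compat [set a; b] [set a; d].
Proof.
rewrite /= !inE negb_or => /andP[/andP[ab ad] /andP[bd _]].
rewrite /keel_compat; apply/or4P; case.
- move/subsetP/(_ b); rewrite !inE eqxx orbT => /(_ isT).
  by case/orP => /eqP h; [move: ab | move: bd]; rewrite h eqxx.
- move/subsetP/(_ d); rewrite !inE eqxx orbT => /(_ isT).
  by case/orP => /eqP h; [move: ad | move: bd]; rewrite h eqxx.
- by move/subsetP/(_ a); rewrite !inE eqxx => /(_ isT).
- by move/subset_leq_card; rewrite compl_card !pair_card.
Qed.

Lemma uniq5P (i j k' l m : 'I_5) : uniq [:: i; j; k'; l; m] ->
  [/\ [/\ i != j, i != k', i != l & i != m], [/\ j != k', j != l & j != m],
      [/\ k' != l & k' != m] & l != m].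
Proof.
rewrite /= !inE !negb_or => /andP[/andP[ij /andP[ik /andP[il im]]]
  /andP[/andP[jk /andP[jl jm]] /andP[/andP[kl km] /andP[lm _]]]].
by do !split.
Qed.

Lemma keel_sum_char (i j k' l : 'I_5) (S : {set 'I_5}) : uniq [:: i; j; k'; l] ->
  [&& i \in S, j \in S, k' \notin S & l \notin S] =
  (S == [set i; j]) || (S == ~: [set k'; l]).
Proof.
move=> u; have [m um] := fifth u.
have [[ij ik il im] [jk jl jm] [kl km] lm] := uniq5P um.
have ex := exhaust _ um.
apply/idP/idP.
  case/and4P => iS jS kS lS; case mS: (m \in S); apply/orP; [right|left]; apply/eqP/setP => x;
    rewrite !inE; case/orP: (ex x) => [/eqP->|/orP[/eqP->|/orP[/eqP->|/orP[/eqP->|/eqP->]]]] //;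
    rewrite ?iS ?jS ?mS ?eqxx ?orbT //= ?(negbTE kS) ?(negbTE lS) //;
    rewrite ?(eq_sym j) ?(eq_sym k') ?(eq_sym l) ?(eq_sym m) ?(negbTE ij) ?(negbTE ik) ?(negbTE il) ?(negbTE im)
      ?(negbTE jk) ?(negbTE jl) ?(negbTE jm) ?(negbTE kl) ?(negbTE km) ?(negbTE lm) ?eqxx //.
case/orP => /eqP ->; rewrite !inE ?eqxx ?orbT //=.
  by rewrite ?(eq_sym k') ?(eq_sym l) ?(negbTE ik) ?(negbTE jk) ?(negbTE il) ?(negbTE jl).
by rewrite (negbTE ik) (negbTE il) (negbTE jk) (negbTE jl).
Qed.

Lemma uniq4P (i j k' l : 'I_5) : uniq [:: i; j; k'; l] <->
  [/\ [/\ i != j, i != k' & i != l], [/\ j != k' & j != l] & k' != l].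
Proof.
rewrite /= !inE !negb_or; split.
  by move=> /andP[/andP[ij /andP[ik il]] /andP[/andP[jk jl] /andP[kl _]]]; do !split.
by case=> [[-> -> ->] [-> ->] ->].
Qed.

Lemma uniq4_swap23 (i j k' l : 'I_5) : uniq [:: i; j; k'; l] -> uniq [:: i; k'; j; l].
Proof.
move/uniq4P => [[ij ik il] [jk jl] kl]; apply/uniq4P.
by rewrite ij ik il jl kl eq_sym jk.
Qed.
Lemma uniq4_swap34 (i j k' l : 'I_5) : uniq [:: i; j; k'; l] -> uniq [:: i; j; l; k'].
Proof.
move/uniq4P => [[ij ik il] [jk jl] kl]; apply/uniq4P.
by rewrite ij ik il jl jk eq_sym kl.
Qed.

Section Ideal.
Variable k : fieldType.
Local Notation P := (KPoly k 5).
Implicit Types p r : P.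

Lemma I0 : keel_ideal (0 : P).
Proof. by exists [::]; split => //; rewrite big_nil. Qed.
Lemma ID p r : keel_ideal p -> keel_ideal r -> keel_ideal (p + r).
Proof.
case=> s1 [h1 ->] [s2 [h2 ->]]; exists (s1 ++ s2); split; last by rewrite big_cat.
by move=> x; rewrite mem_cat => /orP[/h1|/h2].
Qed.
Lemma IM r p : keel_ideal p -> keel_ideal (r * p).
Proof.
case=> s [h ->]; exists [seq (r * x.1, x.2) | x <- s]; split.
  by move=> x /mapP [y /h hy ->].
by rewrite big_map mulr_sumr; apply: eq_bigr => x _; rewrite mulrA.
Qed.
Lemma IMr r p : keel_ideal p -> keel_ideal (p * r).
Proof. by rewrite mulrC; apply: IM. Qed.
Lemma IN p : keel_ideal p -> keel_ideal (- p).
Proof. by move=> h; rewrite -mulN1r; apply: IM. Qed.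
Lemma IB p r : keel_ideal p -> keel_ideal r -> keel_ideal (p - r).
Proof. by move=> h1 h2; apply: ID => //; apply: IN. Qed.
Lemma IZ c p : keel_ideal p -> keel_ideal (c *: p).
Proof. by rewrite -mul_mpolyC; apply: IM. Qed.
Lemma Isum (I : Type) (s : seq I) (Pr : pred I) (F : I -> P) :
  (forall i, Pr i -> keel_ideal (F i)) -> keel_ideal (\sum_(i <- s | Pr i) F i).
Proof. by move=> h; elim/big_rec: _ => [|i x /h hi hx]; [exact: I0| exact: ID]. Qed.
Lemma IG p : keel_gen p -> keel_ideal p.
Proof. by move=> h; exists [:: (1, p)]; split; [move=> x; rewrite inE => /eqP ->|rewrite big_seq1 mul1r]. Qed.

Local Notation D := (D k).
Lemma Ginv (S : {set 'I_5}) : ~~ keel_valid S -> keel_ideal (D S).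
Proof. by move=> h; apply: IG; apply: Or41; exists S. Qed.
Lemma Gcomp (S : {set 'I_5}) : keel_ideal (D S - D (~: S)).
Proof. by apply: IG; apply: Or42; exists S. Qed.
Lemma Gincomp (S T : {set 'I_5}) : keel_valid S -> keel_valid T -> ~~ keel_compat S T ->
  keel_ideal (D S * D T).
Proof. by move=> h1 h2 h3; apply: IG; apply: Or44; exists S, T. Qed.

Lemma keel_sum_eq (i j k' l : 'I_5) : uniq [:: i; j; k'; l] ->
  keel_sum k i j k' l = D [set i; j] + D (~: [set k'; l]).
Proof.
move=> u; have [[ij ik il] [jk jl] kl] := (uniq4P i j k' l).1 u.
have AB : [set i; j] != ~: [set k'; l].
  apply/negP => /eqP /(congr1 (fun X : {set 'I_5} => #|X|)).
  by rewrite compl_card !pair_card.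
rewrite /keel_sum (bigD1 [set i; j]) /=; last by rewrite keel_sum_char // eqxx.
rewrite (bigD1 (~: [set k'; l])) /=; last by rewrite keel_sum_char // eqxx orbT eq_sym AB.
rewrite big1 ?addr0 // => S /andP[/andP[+ h1] h2]; rewrite keel_sum_char //.
by rewrite (negbTE h1) (negbTE h2).
Qed.

Local Notation Dp a b := (D [set a; b]).

Lemma rel2 (i j k' l : 'I_5) : uniq [:: i; j; k'; l] ->
  keel_ideal (Dp i j + Dp k' l - (Dp i k' + Dp j l)).
Proof.
move=> u; have u' := uniq4_swap23 u.
have g : keel_ideal (keel_sum k i j k' l - keel_sum k i k' j l).
  by apply: IG; apply: Or43; exists i, j, k', l; split => //; left.
rewrite (keel_sum_eq u) (keel_sum_eq u') in g.
have := ID (ID g (Gcomp [set k'; l])) (IN (Gcomp [set j; l])).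
congr keel_ideal; ring.
Qed.

Lemma rel3 (i j k' l : 'I_5) : uniq [:: i; j; k'; l] ->
  keel_ideal (Dp i k' + Dp j l - (Dp i l + Dp j k')).
Proof.
move=> u; have u' := uniq4_swap23 u; have u'' := uniq4_swap23 (uniq4_swap34 u).
have g : keel_ideal (keel_sum k i k' j l - keel_sum k i l j k').
  by apply: IG; apply: Or43; exists i, j, k', l; split => //; right.
rewrite (keel_sum_eq u') (keel_sum_eq u'') in g.
have := ID (ID g (Gcomp [set j; l])) (IN (Gcomp [set j; k'])).
congr keel_ideal; ring.
Qed.

End Ideal.

Section Cls.
Variable k : fieldType.
Local Notation V := (V k).
Local Notation q := (@q k).
Definition o4 : 'I_5 := ord_max.
Definition dl (c : 'I_5) : V := delta_mx 0 c.
Definition c0 : V := dl o4 - \sum_(x | x != o4) dl x.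
Definition beta (x : 'I_5) : V := if x == o4 then - c0 else dl x.
Definition pairOf (S : {set 'I_5}) := if #|S| == 2%N then S else ~: S.
Definition cls (S : {set 'I_5}) : V :=
  if keel_valid S then c0 + \sum_(x in pairOf S) beta x else 0.

Lemma q_dl x y : q (dl x) (dl y) = if x == y then eps k x else 0.
Proof.
rewrite q_e /dl mxE eqxx /= eq_sym; case: eqP => [->|_]; first by rewrite mulr1.
by rewrite mulr0.
Qed.

Lemma q_dl_c0 x : q (dl x) c0 = 1.
Proof.
rewrite /c0 qDr qNr qsumr q_dl.
case: (x =P o4) => [->|/eqP hx].
  rewrite big1 ?subr0; first by rewrite /eps eqxx.
  by move=> y hy; rewrite q_dl eq_sym (negbTE hy).
rewrite (bigD1 x) //= q_dl eqxx big1 ?addr0.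
  by rewrite /eps (negbTE hx) sub0r opprK.
by move=> y /andP[_ hy]; rewrite q_dl eq_sym (negbTE hy).
Qed.

Lemma q_c0_dl x : q c0 (dl x) = 1.
Proof. by rewrite qC q_dl_c0. Qed.

Lemma q_c0_c0 : q c0 c0 = -3%:R.
Proof.
rewrite {1}/c0 qDl qNl qsuml q_dl_c0.
rewrite (eq_bigr (fun _ => 1)) => [|y _]; last exact: q_dl_c0.
rewrite sumr_const cardC1 card_ord /=; ring.
Qed.

Lemma q_c0_beta x : q c0 (beta x) = if x == o4 then 3%:R else 1.
Proof.
rewrite /beta; case: ifP => _; last exact: q_c0_dl.
by rewrite qNr q_c0_c0 opprK.
Qed.

Lemma q_beta x y : q (beta x) (beta y) =
  if x == y then (if x == o4 then -3%:R else -1)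
  else (if (x == o4) || (y == o4) then -1 else 0).
Proof.
rewrite /beta; case: (x =P o4) => [->|/eqP hx]; case: (y =P o4) => [->|/eqP hy] //=.
- by rewrite qNl qNr opprK q_c0_c0.
- by rewrite eq_sym (negbTE hy) qNl q_c0_dl.
- by rewrite (negbTE hx) qNr q_dl_c0.
- by rewrite q_dl /eps (negbTE hx); case: (x == y).
Qed.

Lemma cls_pair (a b : 'I_5) : a != b -> cls [set a; b] = c0 + beta a + beta b.
Proof.
move=> ab; rewrite /cls valid_pair // /pairOf pair_card // eqxx.
rewrite big_setU1 ?inE //= big_set1 addrA //.
Qed.

Lemma valid_compl (S : {set 'I_5}) : keel_valid (~: S) = keel_valid S.
Proof. by rewrite /keel_valid setCK andbC. Qed.

Lemma valid_card (S : {set 'I_5}) : keel_valid S -> (#|S| == 2%N) || (#|S| == 3%N).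
Proof. rewrite /keel_valid compl_card => /andP [h1 h2]; lia. Qed.

Lemma pairOf_compl (S : {set 'I_5}) : keel_valid S -> pairOf (~: S) = pairOf S.
Proof.
move=> /valid_card; rewrite /pairOf compl_card setCK.
by case/orP => /eqP ->.
Qed.

Lemma cls_compl (S : {set 'I_5}) : cls (~: S) = cls S.
Proof.
rewrite /cls valid_compl; case: ifP => // v; by rewrite pairOf_compl.
Qed.

Lemma pairOf_card (S : {set 'I_5}) : keel_valid S -> #|pairOf S| = 2%N.
Proof.
move=> /valid_card; rewrite /pairOf; case/orP => /eqP h; rewrite h //=.
by rewrite compl_card h.
Qed.

Lemma cls_pairOf (S : {set 'I_5}) : keel_valid S -> cls (pairOf S) = cls S.
Proof. by rewrite /pairOf; case: ifP => // _ _; rewrite cls_compl. Qed.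

Lemma compat_C1 (S T : {set 'I_5}) : keel_compat (~: S) T = keel_compat S T.
Proof.
rewrite /keel_compat subCset subsetC !setCS.
by case: (S \subset T); case: (T \subset S); case: (S \subset ~: T); case: (~: T \subset S).
Qed.

Lemma compat_C2 (S T : {set 'I_5}) : keel_compat S (~: T) = keel_compat S T.
Proof.
rewrite /keel_compat !setCK.
by case: (S \subset T); case: (T \subset S); case: (S \subset ~: T); case: (~: T \subset S).
Qed.

Lemma compat_pairOf (S T : {set 'I_5}) :
  keel_compat (pairOf S) (pairOf T) = keel_compat S T.
Proof.
rewrite /pairOf; case: ifP => _; case: ifP => _; by rewrite ?compat_C1 ?compat_C2.
Qed.

Lemma pairs_share (a b c d : 'I_5) : a != b -> c != d ->
  ~~ keel_compat [set a; b] [set c; d] ->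
  exists x y z, [/\ uniq [:: x; y; z], [set a; b] = [set x; y] & [set c; d] = [set x; z]].
Proof.
move=> ab cd hc.
have set2C (u v : 'I_5) : [set u; v] = [set v; u] by rewrite setUC.
have gen : forall x y z, x != y -> x != z -> [set a; b] = [set x; y] -> [set c; d] = [set x; z] ->
    exists x y z, [/\ uniq [:: x; y; z], [set a; b] = [set x; y] & [set c; d] = [set x; z]].
  move=> x y z xy xz h1 h2; exists x, y, z; split => //.
  rewrite /= !inE (negbTE xy) (negbTE xz) /= andbT; apply/eqP => yz; move: hc.
  by rewrite h1 h2 yz /keel_compat subxx.
case: (a =P c) => [ac|/eqP ac].
  by apply: (gen a b d) => //; rewrite ac.
case: (a =P d) => [ad|/eqP ad].
  by apply: (gen a b c) => //; first [by rewrite eq_sym | by rewrite ad set2C | by rewrite bc | by rewrite set2C | by rewrite bd eq_sym | by rewrite bd set2C | by rewrite ad eq_sym].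
case: (b =P c) => [bc|/eqP bc].
  by apply: (gen b a d) => //; first [by rewrite eq_sym | by rewrite ad set2C | by rewrite bc | by rewrite set2C | by rewrite bd eq_sym | by rewrite bd set2C | by rewrite ad eq_sym].
case: (b =P d) => [bd|/eqP bd].
  by apply: (gen b a c) => //; first [by rewrite eq_sym | by rewrite ad set2C | by rewrite bc | by rewrite set2C | by rewrite bd eq_sym | by rewrite bd set2C | by rewrite ad eq_sym].
exfalso; move/negP: hc; apply; rewrite /keel_compat; apply/or4P; apply: Or43.
apply/subsetP => x; rewrite !inE => /orP[]/eqP ->; rewrite negb_or ?ac ?ad ?bc ?bd //.
Qed.

Lemma q_pair_share (x y z : 'I_5) : uniq [:: x; y; z] ->
  q (c0 + beta x + beta y) (c0 + beta x + beta z) = 0.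
Proof.
rewrite /= !inE negb_or andbT => /andP[/andP [xy xz] yz].
have qexp (u a b c : V) : q (u + a + b) (u + a + c) =
  q u u + q u a + q u c + q u a + q a a + q a c + q u b + q b a + q b c.
  by rewrite !(qDl, qDr) !(qC _ u); ring.
rewrite qexp !q_c0_beta !q_beta q_c0_c0 eqxx.
rewrite (negbTE xz) (eq_sym y x) (negbTE xy) (negbTE yz).
case: (x =P o4) => [ex|_]; case: (y =P o4) => [ey|_]; case: (z =P o4) => [ez|_] /=;
  rewrite ?orbT ?orbF; try ring.
all: by subst; rewrite ?eqxx in xy xz yz.
Qed.

Lemma q_cls_incompat (S T : {set 'I_5}) : keel_valid S -> keel_valid T ->
  ~~ keel_compat S T -> q (cls S) (cls T) = 0.
Proof.
move=> vS vT hc; rewrite -(cls_pairOf vS) -(cls_pairOf vT).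
rewrite -compat_pairOf in hc.
have /cards2P [a [b [ab hS]]] : #|pairOf S| == 2%N by rewrite pairOf_card.
have /cards2P [c [d [cd hT]]] : #|pairOf T| == 2%N by rewrite pairOf_card.
rewrite hS hT in hc *.
have [x [y [z [u h1 h2]]]] := pairs_share ab cd hc.
move: (u); rewrite /= !inE negb_or andbT => /andP[/andP [xy xz] yz].
by rewrite h1 h2 !cls_pair // q_pair_share.
Qed.

End Cls.

Section Phi.
Variable k : fieldType.
Local Notation V := (V k).
Local Notation A := (A k).
Local Notation q := (@q k).
Local Notation P := (KPoly k 5).

Definition inA (c : k) : A := (c, 0, 0).
Fact inA_zmod : zmod_morphism inA.
Proof. by move=> a b; rewrite /inA; congr (_, _, _); rewrite subrr. Qed.
HB.instance Definition _ := GRing.isZmodMorphism.Build k A inA inA_zmod.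
Fact inA_mul : multiplicative inA.
Proof.
split => [a b|//]; rewrite /inA AmulE /= !scaler0 addr0 q0l !mulr0 !addr0 //.
Qed.
HB.instance Definition _ := GRing.isMultiplicative.Build k A inA inA_mul.

Definition ell (i : 'I_(keel_nvar 5)) : A := (0, cls k (enum_val i), 0).
Definition phi (p : P) : A := mmap inA ell p.

Lemma phi_D (S : {set 'I_5}) : phi (D k S) = (0, cls k S, 0).
Proof. by rewrite /phi /D mmapX mmap1U /ell enum_rankK. Qed.
Lemma phi_C c : phi c%:MP = (c, 0, 0).
Proof. by rewrite /phi mmapC. Qed.
Lemma phiD p r : phi (p + r) = phi p + phi r.
Proof. exact: rmorphD. Qed.
Lemma phiB p r : phi (p - r) = phi p - phi r.
Proof. exact: rmorphB. Qed.
Lemma phiM p r : phi (p * r) = phi p * phi r.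
Proof. exact: rmorphM. Qed.
Lemma phiZ c p : phi (c *: p) = ((c, 0, 0) : A) * phi p.
Proof. by rewrite -mul_mpolyC phiM phi_C. Qed.

Lemma phi_gen p : keel_gen p -> phi p = 0.
Proof.
case.
- by case=> S [hv ->]; rewrite phi_D /cls (negbTE hv).
- case=> S ->; rewrite phiB !phi_D cls_compl; exact: subrr.
- case=> i [j [k' [l [u h]]]].
  have u' := uniq4_swap23 u; have u'' := uniq4_swap23 (uniq4_swap34 u).
  have [[ij ik il] [jk jl] kl] := (uniq4P i j k' l).1 u.
  case: h => ->; rewrite phiB !keel_sum_eq // !phiD !phi_D !cls_compl !cls_pair //;
    rewrite ?(eq_sym j) //; apply/eqP; rewrite subr_eq0; apply/eqP; congr (_, _, _);
    rewrite ?addr0 //= ; apply/rowP => t; rewrite !mxE; ring.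
- case=> S [T [vS vT hc ->]]; rewrite phiM !phi_D AmulE /= !scale0r addr0 !mul0r !add0r.
  by rewrite q_cls_incompat.
Qed.

Lemma phi_ideal p : keel_ideal p -> phi p = 0.
Proof.
case=> s [hs ->]; rewrite /phi rmorph_sum big1_seq // => x /andP[_ /hs hx].
rewrite rmorphM; change (phi x.1 * phi x.2 = 0); by rewrite (phi_gen hx) mulr0.
Qed.
End Phi.

Definition i0 : 'I_5 := @Ordinal 5 0 isT.
Definition i1 : 'I_5 := @Ordinal 5 1 isT.
Definition i2 : 'I_5 := @Ordinal 5 2 isT.
Definition i3 : 'I_5 := @Ordinal 5 3 isT.

Lemma uniq_all : uniq [:: i0; i1; i2; i3; o4]. Proof. by []. Qed.

Lemma sum4 (M : nmodType) (F : 'I_5 -> M) :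
  \sum_(x | x != o4) F x = F i0 + F i1 + F i2 + F i3.
Proof.
rewrite (bigD1 i0) // (bigD1 i1) // (bigD1 i2) // (bigD1 i3) // big1 => [|x].
  by rewrite /= addr0 !addrA. case/orP: (exhaust x uniq_all) => [/eqP->|/orP[/eqP->|/orP[/eqP->|/orP[/eqP->|/eqP->]]]] //=;
  by rewrite ?eqxx ?andbF.
Qed.

Section Compl.
Variable k : fieldType.
Local Notation V := (V k).
Local Notation A := (A k).
Local Notation q := (@q k).
Local Notation P := (KPoly k 5).
Local Notation Dp a b := (D k [set a; b]).
Local Notation I := (@keel_ideal k 5).

Lemma set2C (u v : 'I_5) : [set u; v] = [set v; u].
Proof. by rewrite setUC. Qed.

Lemma inc (a b d : 'I_5) : uniq [:: a; b; d] -> I (Dp a b * Dp a d).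
Proof.
move=> u; have := u; rewrite /= !inE negb_or andbT => /andP[/andP[ab ad] _].
by apply: Gincomp; rewrite ?valid_pair // incompat_pair.
Qed.

Lemma DDl (a b c d e : 'I_5) : uniq [:: a; b; c; d; e] ->
  I (Dp a b * Dp c d - Dp a b * Dp c e).
Proof.
move=> u; have [[ab ac ad ae] [bc bd be] [cd ce] de] := uniq5P u.
have r : I (Dp c d + Dp e a - (Dp c e + Dp d a)).
  apply: rel2; apply/uniq4P; rewrite cd ce eq_sym ac de eq_sym ad eq_sym ae.
  by split.
have h1 : I (Dp a b * Dp a e).
  by apply: inc; rewrite /= !inE negb_or ab ae be.
have h2 : I (Dp a b * Dp a d).
  by apply: inc; rewrite /= !inE negb_or ab ad bd.
have := ID (ID (IM (Dp a b) r) (IN h1)) h2.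
by congr keel_ideal; rewrite (set2C e a) (set2C d a); ring.
Qed.

Lemma sqrel (a b j l : 'I_5) : uniq [:: a; b; j; l] ->
  I (Dp a b * Dp a b + Dp a b * Dp j l).
Proof.
move=> u; have [[ab aj al] [bj bl] jl] := (uniq4P a b j l).1 u.
have r := rel2 k u.
have h1 : I (Dp a b * Dp a j) by apply: inc; rewrite /= !inE negb_or ab aj bj.
have h2 : I (Dp a b * Dp b l).
  by rewrite set2C; apply: inc; rewrite /= !inE negb_or eq_sym ab bl al.
have := ID (ID (IM (Dp a b) r) h1) h2.
by congr keel_ideal; ring.
Qed.


Definition Q : P := Dp i0 i1 * Dp i2 i3.
Definition LH : P := Dp i0 i1 + Dp i2 o4 + Dp i3 o4.
Definition L (c : 'I_5) : P := if c == o4 then LH else Dp c o4.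

Lemma d1 : I (Dp i0 o4 * Dp i2 i3 - Q).
Proof.
have := DDl (isT : uniq [:: i2; i3; i0; o4; i1]).
by congr keel_ideal; rewrite /Q; ring.
Qed.
Lemma d2 : I (Dp i1 o4 * Dp i2 i3 - Q).
Proof.
have := DDl (isT : uniq [:: i2; i3; i1; o4; i0]).
by congr keel_ideal; rewrite /Q (set2C i1 i0); ring.
Qed.
Lemma d3 : I (Dp i2 o4 * Dp i0 i1 - Q).
Proof.
have := DDl (isT : uniq [:: i0; i1; i2; o4; i3]).
by congr keel_ideal; rewrite /Q; ring.
Qed.
Lemma d4 : I (Dp i3 o4 * Dp i0 i1 - Q).
Proof.
have := DDl (isT : uniq [:: i0; i1; i3; o4; i2]).
by congr keel_ideal; rewrite /Q (set2C i3 i2); ring.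
Qed.
Lemma s0 : I (Dp i0 o4 * Dp i0 o4 + Q).
Proof.
have := ID (sqrel (isT : uniq [:: i0; o4; i2; i3])) (IN d1).
by congr keel_ideal; ring.
Qed.
Lemma s1 : I (Dp i1 o4 * Dp i1 o4 + Q).
Proof.
have := ID (sqrel (isT : uniq [:: i1; o4; i2; i3])) (IN d2).
by congr keel_ideal; ring.
Qed.
Lemma s2 : I (Dp i2 o4 * Dp i2 o4 + Q).
Proof.
have := ID (sqrel (isT : uniq [:: i2; o4; i0; i1])) (IN d3).
by congr keel_ideal; ring.
Qed.
Lemma s3 : I (Dp i3 o4 * Dp i3 o4 + Q).
Proof.
have := ID (sqrel (isT : uniq [:: i3; o4; i0; i1])) (IN d4).
by congr keel_ideal; ring.
Qed.
Lemma s01 : I (Dp i0 i1 * Dp i0 i1 + Q).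
Proof. exact: (sqrel (isT : uniq [:: i0; i1; i2; i3])). Qed.

Lemma inc4 (x y : 'I_5) : uniq [:: o4; x; y] -> I (Dp x o4 * Dp y o4).
Proof. by move=> u; rewrite (set2C x) (set2C y); apply: inc. Qed.


Lemma lh0 : I (LH * Dp i0 o4).
Proof.
have := ID (ID (inc (isT : uniq [:: i0; i1; o4])) (inc4 (isT : uniq [:: o4; i2; i0])))
  (inc4 (isT : uniq [:: o4; i3; i0])).
by congr keel_ideal; rewrite /LH; ring.
Qed.
Lemma lh1 : I (LH * Dp i1 o4).
Proof.
have := ID (ID (inc (isT : uniq [:: i1; i0; o4])) (inc4 (isT : uniq [:: o4; i2; i1])))
  (inc4 (isT : uniq [:: o4; i3; i1])).
by congr keel_ideal; rewrite /LH (set2C i1 i0); ring.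
Qed.
Lemma lh2 : I (LH * Dp i2 o4).
Proof.
have := ID (ID d3 s2) (inc4 (isT : uniq [:: o4; i3; i2])).
by congr keel_ideal; rewrite /LH; ring.
Qed.
Lemma lh3 : I (LH * Dp i3 o4).
Proof.
have := ID (ID d4 s3) (inc4 (isT : uniq [:: o4; i2; i3])).
by congr keel_ideal; rewrite /LH; ring.
Qed.
Lemma lhh : I (LH * LH - Q).
Proof.
have h := inc4 (isT : uniq [:: o4; i2; i3]).
have := ID (ID (ID (ID (ID s01 s2) s3) (IZ 2%:R d3)) (IZ 2%:R d4)) (IZ 2%:R h).
by congr keel_ideal; rewrite /LH -!mul_mpolyC rmorphMn rmorph1; ring.
Qed.

Lemma LL (c d : 'I_5) : I (L c * L d - (if c == d then eps k c else 0) *: Q).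
Proof.
case/orP: (exhaust c uniq_all) => [/eqP->|/orP[/eqP->|/orP[/eqP->|/orP[/eqP->|/eqP->]]]];
case/orP: (exhaust d uniq_all) => [/eqP->|/orP[/eqP->|/orP[/eqP->|/orP[/eqP->|/eqP->]]]];
rewrite /L /eps /= ?scaleN1r ?scale0r ?scale1r ?subr0 ?opprK;
first [exact: s0 | exact: s1 | exact: s2 | exact: s3 | exact: lhh
  | exact: lh0 | exact: lh1 | exact: lh2 | exact: lh3
  | (rewrite mulrC; first [exact: lh0 | exact: lh1 | exact: lh2 | exact: lh3])
  | by apply: inc4].
Qed.

Lemma LQ (c : 'I_5) : I (L c * Q).
Proof.
case/orP: (exhaust c uniq_all) => [/eqP->|/orP[/eqP->|/orP[/eqP->|/orP[/eqP->|/eqP->]]]];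
rewrite /L /= /Q.
- by rewrite mulrA; apply: IMr; apply: (inc (isT : uniq [:: i0; o4; i1])).
- by rewrite mulrA; apply: IMr; rewrite (set2C i0 i1); apply: (inc (isT : uniq [:: i1; o4; i0])).
- by rewrite mulrCA; apply: IM; apply: (inc (isT : uniq [:: i2; o4; i3])).
- by rewrite mulrCA; apply: IM; rewrite (set2C i2 i3); apply: (inc (isT : uniq [:: i3; o4; i2])).
have h1 := inc (isT : uniq [:: i2; o4; i3]).
have h2 := inc (isT : uniq [:: i3; o4; i2]).
have h3 := DDl (isT : uniq [:: i2; i3; i0; i1; o4]).
have h4 := inc (isT : uniq [:: i0; i1; o4]).
have := ID (ID (ID (IM (Dp i0 i1) h3) (IM (Dp i2 i3) h4)) (IM (Dp i0 i1) h1)) (IM (Dp i0 i1) h2).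
by congr keel_ideal; rewrite /LH (set2C i3 i2); ring.
Qed.

Lemma Itrans (p r t : P) : I (p - r) -> I (r - t) -> I (p - t).
Proof. by move=> h1 h2; have := ID h1 h2; congr keel_ideal; ring. Qed.

Definition S4 : P := \sum_(x | x != o4) Dp x o4.
Definition h (a b : 'I_5) : P := Dp a b + S4 - Dp a o4 - Dp b o4.

Lemma hstep (a b c : 'I_5) : uniq [:: a; b; c; o4] -> I (h a b - h a c).
Proof. by move=> u; have := rel2 k u; congr keel_ideal; rewrite /h; ring. Qed.
Lemma hsym (a b : 'I_5) : h a b = h b a.
Proof. by rewrite /h set2C; ring. Qed.
Lemma LH_h : LH = h i0 i1.
Proof. by rewrite /h /S4 sum4 /LH; ring. Qed.

Lemma hconst (a b : 'I_5) : uniq [:: a; b; o4] -> I (h a b - h i0 i1).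
Proof.
have r01 : I (h i0 i1 - h i0 i1) by rewrite subrr; exact: I0.
have r02 : I (h i0 i2 - h i0 i1) by apply: hstep.
have r03 : I (h i0 i3 - h i0 i1) by apply: hstep.
have r12 : I (h i1 i2 - h i0 i1) by rewrite (hsym i0 i1); apply: hstep.
have r13 : I (h i1 i3 - h i0 i1) by rewrite (hsym i0 i1); apply: hstep.
have r23 : I (h i2 i3 - h i0 i1).
  by apply: (Itrans (r := h i2 i0)); [apply: hstep | rewrite hsym].
move=> u; move: (u); rewrite /= !inE negb_or andbT => /andP[/andP[ab a4] b4].
case/orP: (exhaust a uniq_all) => [/eqP ea|/orP[/eqP ea|/orP[/eqP ea|/orP[/eqP ea|/eqP ea]]]];
case/orP: (exhaust b uniq_all) => [/eqP eb|/orP[/eqP eb|/orP[/eqP eb|/orP[/eqP eb|/eqP eb]]]];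
subst; rewrite ?eqxx // in ab a4 b4 *;
first [ assumption | (rewrite hsym; assumption) ].
Qed.

Definition sig1 (v : V) : P := \sum_c v 0 c *: L c.
Lemma sig1D x y : sig1 (x + y) = sig1 x + sig1 y.
Proof. by rewrite /sig1 -big_split; apply: eq_bigr => c _; rewrite mxE scalerDl. Qed.
Lemma sig1Z a x : sig1 (a *: x) = a *: sig1 x.
Proof. by rewrite /sig1 scaler_sumr; apply: eq_bigr => c _; rewrite mxE scalerA. Qed.
Lemma sig10 : sig1 0 = 0.
Proof. by rewrite /sig1 big1 // => c _; rewrite mxE scale0r. Qed.
Lemma sig1N x : sig1 (- x) = - sig1 x.
Proof. by rewrite -scaleN1r sig1Z scaleN1r. Qed.
Lemma sig1B x y : sig1 (x - y) = sig1 x - sig1 y.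
Proof. by rewrite sig1D sig1N. Qed.
Lemma sig1_sum (J : Type) (r : seq J) (Pr : pred J) (F : J -> V) :
  sig1 (\sum_(j <- r | Pr j) F j) = \sum_(j <- r | Pr j) sig1 (F j).
Proof. by elim/big_rec2: _ => [|j y1 y2 _ <-]; rewrite ?sig10 ?sig1D. Qed.
Lemma sig1_dl c : sig1 (dl k c) = L c.
Proof.
rewrite /sig1 (bigD1 c) //= big1 ?addr0 => [|d hd].
  by rewrite mxE !eqxx scale1r.
by rewrite mxE (negbTE hd) andbF scale0r.
Qed.
Lemma sig1_c0 : sig1 (c0 k) = LH - S4.
Proof.
rewrite /c0 sig1B sig1_dl sig1_sum /L eqxx /S4; congr (_ - _).
by apply: eq_bigr => x hx; rewrite sig1_dl /L (negbTE hx).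
Qed.
Lemma sig1_beta x : sig1 (beta k x) = if x == o4 then S4 - LH else Dp x o4.
Proof.
rewrite /beta; case: ifP => hx; first by rewrite sig1N sig1_c0 opprB.
by rewrite sig1_dl /L hx.
Qed.

Lemma pairlin (a b : 'I_5) : a != b -> I (Dp a b - sig1 (cls k [set a; b])).
Proof.
move=> ab; rewrite cls_pair // sig1D sig1D sig1_c0 !sig1_beta.
case: (a =P o4) => [ea|/eqP a4].
  have b4 : b != o4 by rewrite -ea eq_sym.
  rewrite (negbTE b4) ea set2C.
  have -> : Dp b o4 - (LH - S4 + (S4 - LH) + Dp b o4) = 0 by ring.
  exact: I0.
case: (b =P o4) => [eb|/eqP b4].
  rewrite eb.
  have -> : Dp a o4 - (LH - S4 + Dp a o4 + (S4 - LH)) = 0 by ring.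
  exact: I0.
have := hconst (_ : uniq [:: a; b; o4]).
rewrite /= !inE negb_or ab a4 b4 => /(_ isT).
by congr keel_ideal; rewrite LH_h /h; ring.
Qed.

Lemma lin (S : {set 'I_5}) : I (D k S - sig1 (cls k S)).
Proof.
case vS: (keel_valid S); last first.
  by rewrite /cls vS sig10 subr0; apply: Ginv; rewrite vS.
have hp : forall T : {set 'I_5}, #|T| == 2%N -> I (D k T - sig1 (cls k T)).
  by move=> T /cards2P [a [b [ab ->]]]; apply: pairlin.
case/orP: (valid_card vS) => hS; first exact: hp.
have := ID (Gcomp k S) (hp (~: S) _); rewrite cls_compl.
by rewrite compl_card (eqP hS) => /(_ isT); congr keel_ideal; ring.
Qed.

Lemma bil (x y : V) : I (sig1 x * sig1 y - q x y *: Q).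
Proof.
have -> : sig1 x * sig1 y - q x y *: Q = \sum_c \sum_d
    (x 0 c * y 0 d) *: (L c * L d - (if c == d then eps k c else 0) *: Q).
  rewrite /sig1 /q mulr_suml scaler_suml -sumrB; apply: eq_bigr => c _.
  rewrite mulr_sumr (bigD1 c) //= [in RHS](bigD1 c) //= eqxx.
  rewrite [X in _ = _ + X](eq_bigr (fun d => (x 0 c * y 0 d) *: (L c * L d))) => [|d hd]; last first.
    by rewrite eq_sym (negbTE hd) scale0r subr0.
  rewrite [X in _ + X - _](eq_bigr (fun d => (x 0 c * y 0 d) *: (L c * L d))) => [|d hd]; last first.
    by rewrite -scalerAl -scalerAr scalerA.
  rewrite -scalerAl -scalerAr scalerA scalerBr scalerA.
  rewrite (_ : eps k c * x 0 c * y 0 c = x 0 c * y 0 c * eps k c); last ring.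
  by rewrite addrAC.
apply: Isum => c _; apply: Isum => d _; apply: IZ; exact: LL.
Qed.

Lemma cub (x : V) : I (sig1 x * Q).
Proof.
rewrite /sig1 mulr_suml; apply: Isum => c _; rewrite -scalerAl; apply: IZ; exact: LQ.
Qed.

Definition sig (a : A) : P := a.1.1%:MP + sig1 a.1.2 + a.2 *: Q.
Lemma sigD (a b : A) : sig (a + b) = sig a + sig b.
Proof. by move: a b => [[a0 v] c] [[b0 w] d]; rewrite /sig /= mpolyCD sig1D scalerDl; ring. Qed.
Lemma sig0 : sig 0 = 0.
Proof. by rewrite /sig /= mpolyC0 sig10 scale0r !addr0. Qed.
Lemma sigZ (c : k) (a : A) : sig (((c, 0, 0) : A) * a) = c *: sig a.
Proof.
case: a => [[a0 v] e]; rewrite AmulE /sig /= scaler0 addr0 q0l addr0 mulr0 addr0.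
by rewrite sig1Z mpolyCM -!mul_mpolyC mpolyCM; ring.
Qed.
Lemma sig1_phi : sig 1 = 1.
Proof. by rewrite AoneE /sig /= mpolyC1 sig10 scale0r !addr0. Qed.

Lemma phiX (i : 'I_(keel_nvar 5)) : phi 'X_i = ell k i.
Proof. by rewrite /phi mmapX mmap1U. Qed.

Lemma stepX (i : 'I_(keel_nvar 5)) (a : A) : I ('X_i * sig a - sig (ell k i * a)).
Proof.
set S := enum_val i.
have XD : 'X_i = D k S by rewrite /D /S enum_valK.
case: a => [[a0 v] c]; rewrite /ell -/S AmulE /sig /=.
rewrite scale0r add0r !mul0r add0r mulr0 !add0r sig1Z.
have l1 := lin S; rewrite -XD in l1.
have := ID (ID (ID (ID (IZ a0 l1) (IM (sig1 v) l1)) (bil (cls k S) v)) (IZ c (IMr Q l1)))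
  (IZ c (cub (cls k S))).
by congr keel_ideal; rewrite -!mul_mpolyC; ring.
Qed.

Lemma compl (p : P) : I (p - sig (phi p)).
Proof.
have Cadd : forall p1 p2 : P, I (p1 - sig (phi p1)) -> I (p2 - sig (phi p2)) ->
    I (p1 + p2 - sig (phi (p1 + p2))).
  move=> p1 p2 h1 h2; rewrite phiD sigD.
  by have := ID h1 h2; congr keel_ideal; ring.
have CZ : forall (c : k) (p1 : P), I (p1 - sig (phi p1)) -> I (c *: p1 - sig (phi (c *: p1))).
  move=> c p1 h1; rewrite phiZ sigZ -scalerBr; exact: IZ.
have CX : forall (i : 'I_(keel_nvar 5)) (p1 : P), I (p1 - sig (phi p1)) ->
    I ('X_i * p1 - sig (phi ('X_i * p1))).
  move=> i p1 h1; rewrite phiM phiX.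
  by have := ID (IM 'X_i h1) (stepX i (phi p1)); congr keel_ideal; ring.
have C1 : I (1 - sig (phi 1)).
  by rewrite /phi rmorph1 sig1_phi subrr; exact: I0.
have Cmon : forall m, I ('X_[m] - sig (phi 'X_[m])).
  move=> m; rewrite mpolyXE_id; elim/big_rec: _ => [|i x _ hx]; first exact: C1.
  elim: (m i) => [|e IH]; first by rewrite expr0 mul1r.
  by rewrite exprS -mulrA; apply: CX.
elim/mpolyind: p => [|c m p _ _ IH].
  by rewrite /phi rmorph0 sig0 subrr; exact: I0.
by apply: Cadd => //; apply: CZ.
Qed.

Lemma phi0_ideal (p : P) : phi p = 0 -> I p.
Proof. by move=> h0; have := compl p; rewrite h0 sig0 subr0. Qed.
End Compl.

Section Main.
Variable k : fieldType.
Local Notation V := (V k).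
Local Notation A := (A k).
Local Notation q := (@q k).
Local Notation P := (KPoly k 5).
Local Notation I := (@keel_ideal k 5).

Lemma triple_sum (J : Type) (r : seq J) (Pr : pred J) (f1 : J -> k) (f2 : J -> V) (f3 : J -> k) :
  \sum_(j <- r | Pr j) ((f1 j, f2 j, f3 j) : A) =
  (\sum_(j <- r | Pr j) f1 j, \sum_(j <- r | Pr j) f2 j, \sum_(j <- r | Pr j) f3 j).
Proof.
elim: r => [|x r IH]; first by rewrite !big_nil.
by rewrite !big_cons; case: (Pr x) => //; rewrite IH.
Qed.

Lemma tripleD (a1 a2 c1 c2 : k) (v1 v2 : V) :
  ((a1, v1, c1) : A) + (a2, v2, c2) = (a1 + a2, v1 + v2, c1 + c2).
Proof. by []. Qed.
Lemma tripleN (a1 c1 : k) (v1 : V) : - ((a1, v1, c1) : A) = (- a1, - v1, - c1).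
Proof. by []. Qed.

Lemma phi_L c : phi (L k c) = (0, dl k c, 0).
Proof.
rewrite /L; case: ifP => [/eqP ->|hc].
  rewrite /LH !phiD !phi_D !cls_pair // !tripleD !addr0.
  congr (_, _, _); rewrite /beta eqxx /=.
  rewrite /c0 sum4; apply/rowP => t; rewrite !mxE /=; ring.
rewrite phi_D cls_pair ?hc //; congr (_, _, _).
by rewrite /beta eqxx hc; apply/rowP => t; rewrite !mxE /=; ring.
Qed.

Lemma phi_sig1 (v : V) : phi (sig1 v) = (0, v, 0).
Proof.
rewrite /sig1 /phi rmorph_sum (eq_bigr (fun c => ((0, v 0 c *: dl k c, 0) : A))) => [|c _].
  rewrite triple_sum; congr (_, _, _); [exact: big1 | rewrite [RHS]row_sum_delta // | exact: big1].
change (phi (v 0 c *: L k c) = (0, v 0 c *: dl k c, 0)).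
by rewrite phiZ phi_L AmulE /= !mulr0 scaler0 !addr0 q0l addr0.
Qed.

Lemma fst1M (x y : A) : (x * y).1.1 = x.1.1 * y.1.1.
Proof. by []. Qed.

Lemma phi_const (p : P) : (phi p).1.1 = p@_0.
Proof.
have hX : forall m : 'X_{1..keel_nvar 5}, (phi ('X_[m] : P)).1.1 = (m == 0%MM)%:R.
  move=> m; rewrite /phi mmapX /mmap1.
  have -> : (\prod_(i < keel_nvar 5) ell k i ^+ m i).1.1 = \prod_(i < keel_nvar 5) (0 : k) ^+ m i.
    elim/big_rec2: _ => [//|i x y _ hxy]; rewrite fst1M hxy; congr (_ * _).
    by elim: (m i) => [//|e IH]; rewrite !exprS fst1M IH.
  case: (pickP (fun i => m i != 0%N)) => [i hi|h0].
    rewrite (bigD1 i) //= expr0n (negbTE hi) mul0r.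
    case: eqP => // em; by move: hi; rewrite em mnm0E.
  have -> : m = 0%MM by apply/mnmP => i; rewrite mnm0E; apply/eqP; move/negbT: (h0 i); rewrite negbK.
  by rewrite eqxx big1 // => i _; rewrite mnm0E expr0.
elim/mpolyind: p => [|c m p _ _ IH]; first by rewrite /phi rmorph0 mcoeff0.
rewrite phiD phiZ mcoeffD mcoeffZ mcoeffX -IH; congr (_ + _).
by rewrite fst1M hX.
Qed.

Lemma L_homog c : L k c \is 1.-homog.
Proof.
have hD : forall S : {set 'I_5}, D k S \is 1.-homog.
  by move=> S; rewrite /D dhomogX; apply/mdeg1P; exists (enum_rank S).
rewrite /L; case: ifP => _; last exact: hD.
by rewrite /LH !rpredD.
Qed.

Lemma sig1_homog (v : V) : sig1 v \is 1.-homog.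
Proof. by rewrite /sig1 rpred_sum // => c _; rewrite rpredZ // L_homog. Qed.

Definition Mof (s : St k) : 'M[P]_(bo s, bi s) := \matrix_(r, t) sig1 (mat (s:=s) r t).

Lemma mul_triple0 (x : A) (m : V) : x * (0, m, 0) = (0, x.1.1 *: m, q x.1.2 m).
Proof. by case: x => [[a u] c]; rewrite AmulE /= !mulr0 scale0r addr0 mul0r !addr0 add0r. Qed.

Lemma phi_vM (s : St k) (v : 'rV[P]_(bo s)) t :
  phi ((v *m Mof s) 0 t) = (0, \sum_r (phi (v 0 r)).1.1 *: mat r t,
                                \sum_r q (phi (v 0 r)).1.2 (mat r t)).
Proof.
rewrite mxE /phi rmorph_sum.
rewrite (eq_bigr (fun r => ((0, (phi (v 0 r)).1.1 *: mat r t, q (phi (v 0 r)).1.2 (mat r t)) : A))) => [|r _].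
  by rewrite triple_sum big1.
rewrite mxE rmorphM; change (phi (v 0 r) * phi (sig1 (mat r t)) = (0, (phi (v 0 r)).1.1 *: mat r t, q (phi (v 0 r)).1.2 (mat r t))).
by rewrite phi_sig1 mul_triple0.
Qed.

Lemma exact_gen (s : St k) : Hinv s -> forall v : 'rV[P]_(bo s),
  (forall r, (phi (v 0 r)).1.1 = 0) ->
  (forall t, \sum_r q (phi (v 0 r)).1.2 (mat r t) = 0) ->
  exists w : 'rV[P]_(bo (step s)), vec_in_ideal (v - w *m Mof (step s)).
Proof.
move=> hs v ha hu.
have [al hal] := step_span hu.
have [w1 hw1] := step_surj (step_H hs) (fun r => (phi (v 0 r)).2).
exists (\row_j ((al j)%:MP + sig1 (w1 j))) => r; apply: phi0_ideal.
set W := (\row_j _) *m _.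
rewrite (_ : (v - W) 0 r = v 0 r - W 0 r); last by rewrite !mxE.
rewrite phiB /W phi_vM.
have ew : forall j, phi ((\row_j0 ((al j0)%:MP + sig1 (w1 j0)) : 'rV[P]_(bo (step s))) 0 j) = (al j, w1 j, 0).
  by move=> j; rewrite mxE phiD phi_C phi_sig1 tripleD add0r addr0 addr0.
rewrite (eq_bigr (fun j => al j *: mat j r)) => [|j _]; last by rewrite ew.
rewrite (eq_bigr (fun j => q (w1 j) (mat j r)) (P := xpredT)) => [|j _]; last by rewrite ew.
rewrite hw1 -hal; move: (ha r); case: (phi (v 0 r)) => [[a u] c] /= ->.
by rewrite tripleN tripleD !subrr.
Qed.

Definition bb i := bo (stn k i).
Definition MM i : 'M[P]_(bb i.+1, bb i) := Mof (stn k i.+1).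

Lemma main : keel_koszul k 5.
Proof.
exists bb, (const_mx 1 : 'rV[k]_(bb 0)), MM; split.
- apply/eqP => /rowP /(_ ord0); rewrite !mxE => /eqP; by rewrite oner_eq0.
- by move=> i r s; rewrite mxE sig1_homog.
- move=> i r s; apply: phi0_ideal.
  have -> : (MM i.+1 *m MM i) r s = (row r (MM i.+1) *m MM i) 0 s by rewrite -row_mul !mxE; apply: eq_bigr => j _; rewrite !mxE.
  rewrite (phi_vM (s := stn k i.+1) (row r (MM i.+1)) s).
  have er : forall t, phi (row r (Mof (stn k i.+2)) 0 t) = (0, mat r t, 0).
    by move=> t; rewrite !mxE phi_sig1.
  rewrite (eq_bigr (fun t => 0)) => [|t _]; last by rewrite er scale0r.
  rewrite big1 // (eq_bigr (fun t => q (mat r t) (mat t s))) => [|t _]; last by rewrite er.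
  by rewrite (step_in (s := stn k i.+1)).
- move=> v hv.
  apply: (@exact_gen (stn k 0) (@Hn k 0) v); last by case.
  move=> r; rewrite phi_const.
  rewrite big_ord_recl big_ord0 addr0 mxE mul1r in hv.
  case: r => [[|m] hm] //; rewrite -[RHS]hv; congr (v 0 _)@_0; exact: val_inj.
- move=> i v hv.
  have e : forall t, phi ((v *m MM i) 0 t) = 0 by move=> t; apply: phi_ideal.
  have e1 : forall t, \sum_r (phi (v 0 r)).1.1 *: mat (s := stn k i.+1) r t = 0.
    by move=> t; move: (e t); rewrite (phi_vM (s := stn k i.+1) v t) => /(congr1 (fun x : A => x.1.2)).
  have e2 : forall t, \sum_r q (phi (v 0 r)).1.2 (mat (s := stn k i.+1) r t) = 0.
    by move=> t; move: (e t); rewrite (phi_vM (s := stn k i.+1) v t) => /(congr1 (fun x : A => x.2)).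
  apply: (@exact_gen (stn k i.+1) (@Hn k i.+1) v _ e2).
  exact: (step_R (s := stn k i) e1).
Qed.
End Main.


Theorem mainTheorem1 (k : fieldType) : keel_koszul k 5.
Proof. exact: main. Qed.
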